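(* Let $G$ be a finite group, let $N$ be a non-trivial normal subgroup of $G$ which is a $p$-group for a prime $p$, and let $x,y\in G$. If $C_N(x)=1$, then there exists $n\in N$ such that $p$ divides the order of $\langle x,yn\rangle$. *)

(* Defs.v *)
From mathcomp Require Import all_boot all_fingroup all_solvable.

(* Main.v *)
Require Import Defs.
From mathcomp Require Import all_boot all_fingroup all_solvable.
Set Implicit Arguments.
Unset Strict Implicit.
Unset Printing Implicit Defensive.
Local Open Scope group_scope.

Theorem lemma2p4 (gT : finGroupType) (G N : {group gT}) (p : nat) (x y : gT) :
  prime p -> N <| G -> N :!=: 1 -> p.-group N ->
  x \in G -> y \in G -> 'C_N[x] = 1 ->
  exists2 n, n \in N & (p %| #|<<[set x; (y * n)%g]>>|)%N.
Proof.
move=> pr_p nNG ntN pN xG yG CNx.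
have [sNG nNG'] := andP nNG.
have [n nN n1] := trivgPn _ ntN.
pose H1 := [group of <<[set x; y]>>].
pose Hn := [group of <<[set x; y * n]>>].
case: (boolP (p %| #|H1|)%N) => [h|h1]; first by exists 1; rewrite ?mulg1.
case: (boolP (p %| #|Hn|)%N) => [h|hn]; first by exists n.
exfalso.
have nG : G \subset 'N(N) by [].
have H1G : H1 \subset G.
  by rewrite gen_subG; apply/subsetP=> z /set2P[]->;
     rewrite ?groupM ?(subsetP sNG n nN).
have HnG : Hn \subset G.
  by rewrite gen_subG; apply/subsetP=> z /set2P[]->;
     rewrite ?groupM ?(subsetP sNG n nN).
have nN1 : H1 \subset 'N(N) := subset_trans H1G nG.
have nNn : Hn \subset 'N(N) := subset_trans HnG nG.
have co1 : coprime #|N| #|H1|.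
  by apply: (pnat_coprime pN); rewrite /pgroup p'natE.
have con : coprime #|N| #|Hn|.
  by apply: (pnat_coprime pN); rewrite /pgroup p'natE.
have TI1 := coprime_TIg co1.
have TIn := coprime_TIg con.
have xH1 : x \in H1 by rewrite mem_gen // !inE eqxx.
have xHn : x \in Hn by rewrite mem_gen // !inE eqxx.
have yH1 : y \in H1 by rewrite mem_gen // !inE eqxx orbT.
have ynHn : y * n \in Hn by rewrite mem_gen // !inE eqxx orbT.
have J1 : N * H1 = N <*> H1 by rewrite norm_joinEr.
have Jn : N * Hn = N <*> Hn by rewrite norm_joinEr.
have eqJ : N <*> H1 = N <*> Hn.
  have xJ1 : x \in N <*> H1 by rewrite (subsetP (joing_subr _ _)).
  have xJn : x \in N <*> Hn by rewrite (subsetP (joing_subr _ _)).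
  have yJ1 : y \in N <*> H1 by rewrite (subsetP (joing_subr _ _)).
  have ynJn : y * n \in N <*> Hn by rewrite (subsetP (joing_subr _ _)).
  have nJ1 : n \in N <*> H1 by rewrite (subsetP (joing_subl _ _)).
  have nJn : n \in N <*> Hn by rewrite (subsetP (joing_subl _ _)).
  apply/eqP; rewrite eqEsubset !join_subG !joing_subl /= !sub1set.
  rewrite xJ1 xJn groupM //= andbT.
  by have := groupM ynJn (groupVr nJn); rewrite mulgK.
have card_eq : #|Hn| = #|H1|.
  have := TI_cardMg TI1; have := TI_cardMg TIn.
  rewrite Jn J1 eqJ => -> /eqP; rewrite eqn_pmul2l ?cardG_gt0 // => /eqP.
  by [].
have sHn : Hn \subset N * H1 by rewrite J1 eqJ joing_subr.
have solN : solvable N := pgroup_sol pN.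
have [c cN Hnc] := SchurZassenhaus_trans_sol solN nN1 sHn co1 card_eq.
have xcHn : x ^ c \in Hn by rewrite Hnc memJ_conjg.
have cxG : c \in G := subsetP sNG c cN.
have comm_in : [~ x, c] \in N :&: Hn.
  rewrite inE; apply/andP; split; last exact: groupM (groupVr xHn) xcHn.
  by rewrite commgEr groupM // memJ_norm ?groupV // (subsetP nG).
rewrite TIn inE in comm_in.
have xc : commute x c.
  exact/commgP.
have : c \in 'C_N[x] by rewrite inE cN /= cent1C; apply/cent1P.
rewrite CNx inE => /eqP c1.
move: Hnc; rewrite c1 conjsg1 => Hn1.
have nH1 : n \in H1.
  by rewrite -(mulKg y n) groupM ?groupV // -Hn1.
have : n \in N :&: H1 by rewrite inE nN.
by rewrite TI1 inE (negPf n1).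
Qed.
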